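(* Let $M$ and $N$ be $\lambda$-terms such that $M$ is simple. If $M$ does not improve $N$ eventually, i.e. if not $\mathrm{BT}^c(M) \le_{\mathrm{ev}} \mathrm{BT}^c(N)$, then $M \neq_\beta N$.
   Context: Untyped $\lambda$-calculus modulo $\alpha$. Head reduction step: $\lambda x_1\ldots x_n.(\lambda y.P)QQ_1\ldots Q_m \to \lambda x_1\ldots x_n.P[y:=Q]Q_1\ldots Q_m$; hnf: $\lambda x_1\ldots x_n.\,yQ_1\ldots Q_m$. Clocked Böhm tree $\mathrm{BT}^c(M)$ (coinductive): $\bot$ if $M$ has no hnf; otherwise if $M\to_h^k \lambda x_1\ldots x_n.\,yM_1\ldots M_m$ is the head reduction to hnf, $\mathrm{BT}^c(M)$ is $\lambda x_1\ldots x_n.\,y\,\mathrm{BT}^c(M_1)\ldots\mathrm{BT}^c(M_m)$ with root annotated by $k$. Positions: sequences over $\{0,1,2\}$ ($0$ abstraction body, $1$ function, $2$ argument). $T_1 \le_{\mathrm{ev}} T_2$ means $T_1,T_2$ coincide after erasing annotations and there is $\ell$ such that at every position $p$ of $T_1$ with $|p|\ge\ell$, either neither subtree at $p$ has a root annotation or both do, with annotations $k_1\le k_2$. A redex $(\lambda x.P)Q$ is simple if $x$ occurs at most once in $P$ or $Q$ is a $\beta$-normal form. The simple terms form the largest set $X$ such that each $M\in X$ either has no hnf, or its head reduction to hnf $\lambda x_1\ldots x_n.\,yM_1\ldots M_m$ contracts only simple redexes and $M_1,\dots,M_m\in X$. *)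

(* Defs.v *)
(* Untyped lambda-calculus with de Bruijn indices
   (so terms are identified modulo alpha by construction). *)
From Stdlib Require Import Arith List Relations ClassicalEpsilon.
Import ListNotations.

Inductive term : Type :=
| Var : nat -> term
| App : term -> term -> term
| Lam : term -> term.

Fixpoint lift (d c : nat) (t : term) : term :=
  match t with
  | Var x => if Nat.ltb x c then Var x else Var (x + d)
  | App a b => App (lift d c a) (lift d c b)
  | Lam a => Lam (lift d (S c) a)
  end.

(* t[k := s], removing binder k *)
Fixpoint subst (k : nat) (s : term) (t : term) : term :=
  match t with
  | Var x => if Nat.ltb x k then Var x
             else if Nat.eqb x k then lift k 0 s else Var (pred x)
  | App a b => App (subst k s a) (subst k s b)
  | Lam a => Lam (subst (S k) s a)
  end.

Definition beta_contract (P Q : term) : term := subst 0 Q P.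

Inductive beta : term -> term -> Prop :=
| beta_redex P Q : beta (App (Lam P) Q) (beta_contract P Q)
| beta_appl a a' b : beta a a' -> beta (App a b) (App a' b)
| beta_appr a b b' : beta b b' -> beta (App a b) (App a b')
| beta_lam a a' : beta a a' -> beta (Lam a) (Lam a').

Definition beta_eq : term -> term -> Prop := clos_refl_sym_trans term beta.

Fixpoint beta_nf (t : term) : Prop :=
  match t with
  | Var _ => True
  | App (Lam _) _ => False
  | App a b => beta_nf a /\ beta_nf b
  | Lam a => beta_nf a
  end.

(* head reduction steps, restricted to contracting redexes (\x.P)Q with R P Q:
   \x1..xn.(\y.P) Q Q1..Qm -> \x1..xn.P[y:=Q] Q1..Qm *)
Inductive head_red (R : term -> term -> Prop) : term -> term -> Prop :=
| hr_redex P Q : R P Q -> head_red R (App (Lam P) Q) (beta_contract P Q)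
| hr_app a b a' c : head_red R (App a b) a' -> head_red R (App (App a b) c) (App a' c)
| hr_lam a a' : head_red R a a' -> head_red R (Lam a) (Lam a').

Definition any_redex (P Q : term) : Prop := True.
Definition head_step : term -> term -> Prop := head_red any_redex.

Inductive steps (r : term -> term -> Prop) : nat -> term -> term -> Prop :=
| steps0 t : steps r 0 t t
| stepsS k t u v : r t u -> steps r k u v -> steps r (S k) t v.

Fixpoint lams (n : nat) (t : term) : term :=
  match n with 0 => t | S n' => Lam (lams n' t) end.

Definition apps (h : term) (args : list term) : term := fold_left App args h.

Definition hnf (n y : nat) (args : list term) : term := lams n (apps (Var y) args).

Definition head_to_hnf (M : term) (k n y : nat) (args : list term) : Prop :=
  steps head_step k M (hnf n y args).

Definition has_hnf (M : term) : Prop :=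
  exists k n y args, head_to_hnf M k n y args.

(* the (unique, by determinism of head reduction) data of the head reduction
   to hnf, or None if M has no hnf *)
Definition hnf_data (M : term) : option (nat * nat * nat * list term).
Proof.
  destruct (excluded_middle_informative (has_hnf M)) as [H|H].
  - apply constructive_indefinite_description in H as [k H].
    apply constructive_indefinite_description in H as [n H].
    apply constructive_indefinite_description in H as [y H].
    apply constructive_indefinite_description in H as [args _].
    exact (Some (k, n, y, args)).
  - exact None.
Defined.

(* 0 abstraction body, 1 function, 2 argument *)
Inductive dir : Type := D0 | D1 | D2.
Definition position := list dir.

Inductive label : Type :=
| LLam | LApp | LVar (x : nat) | LBot.

(* a node: its label and its annotation (clock), if any *)
Definition node : Type := (label * option nat)%type.

(* a tree: the node at each position, None if the position is not in the tree *)
Definition ctree : Type := position -> option node.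

(* BT^c(M):  bot if M has no hnf; otherwise \x1..xn. y BT^c(M1)..BT^c(Mm)
   with root annotated by k, where M ->h^k \x1..xn. y M1..Mm. *)
Fixpoint BTc (M : term) (p : position) {struct p} : option node :=
  match hnf_data M with
  | None => match p with [] => Some (LBot, None) | _ => None end
  | Some (k, n, y, args) =>
      (fix spine (ann : option nat) (n : nat) (rargs : list term) (q : position)
           {struct q} : option node :=
         match n with
         | S n' => match q with
                   | [] => Some (LLam, ann)
                   | D0 :: q' => spine None n' rargs q'
                   | _ => None
                   end
         | 0 => match rargs with
                | [] => match q with [] => Some (LVar y, ann) | _ => None end
                | A :: rargs' => match q with
                                 | [] => Some (LApp, ann)
                                 | D1 :: q' => spine None 0 rargs' q'
                                 | D2 :: q' => BTc A q'
                                 | _ => None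
                                 end
                end
         end) (Some k) n (rev args) p
  end.

Definition erase (o : option node) : option label :=
  match o with Some (l, _) => Some l | None => None end.

Definition ev_le (T1 T2 : ctree) : Prop :=
  (forall p, erase (T1 p) = erase (T2 p)) /\
  exists l : nat, forall p nd1, l <= length p -> T1 p = Some nd1 ->
    match snd nd1, option_map snd (T2 p) with
    | None, Some None => True
    | Some k1, Some (Some k2) => k1 <= k2
    | _, _ => False
    end.

Fixpoint occ (k : nat) (t : term) : nat :=
  match t with
  | Var x => if Nat.eqb x k then 1 else 0
  | App a b => occ k a + occ k b
  | Lam a => occ (S k) a
  end.

Definition simple_redex (P Q : term) : Prop := occ 0 P <= 1 \/ beta_nf Q.

CoInductive simple_term : term -> Prop :=
| st_nohnf M : ~ has_hnf M -> simple_term M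
| st_hnf M k n y args :
    steps (head_red simple_redex) k M (hnf n y args) ->
    (forall A, In A args -> simple_term A) ->
    simple_term M.

(* Main.v *)
Require Import Defs.
From Stdlib Require Import Arith List Relations Lia ClassicalEpsilon Classical.
Import ListNotations.


Lemma lift_0 : forall t c, lift 0 c t = t.
Proof. induction t; intros; simpl; try rewrite IHt; try rewrite IHt1, IHt2; auto.
  destruct (Nat.ltb n c); f_equal; lia. Qed.

Lemma lift_lift_merge : forall t d d' c c', c <= c' <= c + d ->
  lift d' c' (lift d c t) = lift (d + d') c t.
Proof. induction t; intros; simpl.
  - destruct (Nat.ltb n c) eqn:E; simpl.
    + apply Nat.ltb_lt in E. destruct (Nat.ltb n c') eqn:E2; auto. apply Nat.ltb_ge in E2; lia.
    + apply Nat.ltb_ge in E. destruct (Nat.ltb (n+d) c') eqn:E2; [apply Nat.ltb_lt in E2; lia|]. f_equal; lia.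
  - rewrite IHt1, IHt2; auto.
  - rewrite IHt; auto; lia.
Qed.

Lemma lift_lift_comm : forall t d d' c c', c <= c' ->
  lift d c (lift d' c' t) = lift d' (c' + d) (lift d c t).
Proof. induction t; intros; simpl.
  - destruct (Nat.ltb n c') eqn:E; destruct (Nat.ltb n c) eqn:E1; simpl;
    repeat match goal with H : Nat.ltb _ _ = true |- _ => apply Nat.ltb_lt in H
    | H : Nat.ltb _ _ = false |- _ => apply Nat.ltb_ge in H end;
    repeat match goal with |- context [Nat.ltb ?a ?b] => destruct (Nat.ltb a b) eqn:?;
      repeat match goal with H : Nat.ltb _ _ = true |- _ => apply Nat.ltb_lt in H
    | H : Nat.ltb _ _ = false |- _ => apply Nat.ltb_ge in H end end; f_equal; lia.
  - rewrite IHt1, IHt2; auto.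
  - rewrite IHt; auto; lia.
Qed.

Ltac bdes := repeat match goal with
  | H : Nat.ltb _ _ = true |- _ => apply Nat.ltb_lt in H
  | H : Nat.ltb _ _ = false |- _ => apply Nat.ltb_ge in H
  | H : Nat.eqb _ _ = true |- _ => apply Nat.eqb_eq in H
  | H : Nat.eqb _ _ = false |- _ => apply Nat.eqb_neq in H
  | |- context [Nat.ltb ?a ?b] => destruct (Nat.ltb a b) eqn:?
  | |- context [Nat.eqb ?a ?b] => destruct (Nat.eqb a b) eqn:?
  end.

Lemma subst_lift_cancel : forall t s d c k, c <= k <= c + d ->
  subst k s (lift (S d) c t) = lift d c t.
Proof. induction t; intros; simpl.
  - bdes; simpl; bdes; try (f_equal; lia); exfalso; lia.
  - rewrite IHt1, IHt2; auto.
  - rewrite IHt; auto; lia.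
Qed.

Lemma lift_subst_hi : forall t s d c k, c <= k ->
  lift d c (subst k s t) = subst (k + d) s (lift d c t).
Proof. induction t; intros; simpl.
  - bdes; simpl; bdes; try (f_equal; lia); try (exfalso; lia).
    subst. rewrite lift_lift_merge by lia. f_equal; lia.
  - rewrite IHt1, IHt2; auto.
  - rewrite IHt by lia. f_equal.
Qed.

Lemma lift_subst_lo : forall t s d c k, k <= c ->
  lift d c (subst k s t) = subst k (lift d (c - k) s) (lift d (S c) t).
Proof. induction t; intros; simpl.
  - bdes; simpl; bdes; try (f_equal; lia); try (exfalso; lia).
    subst. rewrite (lift_lift_comm s k d 0 (c - k)) by lia. f_equal; lia.
  - rewrite IHt1, IHt2; auto.
  - rewrite IHt by lia. repeat f_equal; lia.
Qed.

Lemma subst_subst : forall t u v i k, i <= k ->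
  subst k u (subst i v t) = subst i (subst (k - i) u v) (subst (S k) u t).
Proof. induction t; intros; simpl.
  - bdes; simpl; bdes; try (f_equal; lia); try (exfalso; lia).
    + subst. rewrite (lift_subst_hi v u i 0 (k - i)) by lia. f_equal; lia.
    + subst. rewrite subst_lift_cancel by lia. reflexivity.
  - rewrite IHt1, IHt2; auto.
  - rewrite IHt by lia. repeat f_equal; lia.
Qed.

Lemma subst0_subst : forall t u v k,
  subst k u (subst 0 v t) = subst 0 (subst k u v) (subst (S k) u t).
Proof. intros. rewrite subst_subst by lia. rewrite Nat.sub_0_r. auto. Qed.

Lemma lift_subst0 : forall t s d c,
  lift d c (subst 0 s t) = subst 0 (lift d c s) (lift d (S c) t).
Proof. intros. rewrite lift_subst_lo by lia. rewrite Nat.sub_0_r. auto. Qed.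


Lemma steps_trans : forall r a x y, steps r a x y -> forall b z, steps r b y z -> steps r (a + b) x z.
Proof. induction 1; intros; simpl; auto. econstructor; eauto. Qed.

Lemma steps_one : forall (r : term -> term -> Prop) x y, r x y -> steps r 1 x y.
Proof. intros. econstructor; eauto. constructor. Qed.

Lemma steps_map : forall (r r' : term -> term -> Prop) (f : term -> term),
  (forall x y, r x y -> r' (f x) (f y)) -> forall k x y, steps r k x y -> steps r' k (f x) (f y).
Proof. induction 2; econstructor; eauto. Qed.

Lemma steps_incl : forall (r r' : term -> term -> Prop),
  (forall x y, r x y -> r' x y) -> forall k x y, steps r k x y -> steps r' k x y.
Proof. induction 2; econstructor; eauto. Qed.

Lemma beta_lift : forall M N, beta M N -> forall d c, beta (lift d c M) (lift d c N).
Proof. induction 1; intros; simpl; try (constructor; auto; fail).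
  unfold beta_contract. rewrite lift_subst0. apply beta_redex. Qed.

Lemma beta_subst : forall M N, beta M N -> forall k s, beta (subst k s M) (subst k s N).
Proof. induction 1; intros; simpl; try (constructor; auto; fail).
  unfold beta_contract. rewrite subst0_subst. apply beta_redex. Qed.

Definition red M N := exists c, steps beta c M N.

Lemma steps_appl : forall c a a' b, steps beta c a a' -> steps beta c (App a b) (App a' b).
Proof. intros. eapply (steps_map beta beta (fun x => App x b)); eauto. intros; constructor; auto. Qed.
Lemma steps_appr : forall c a b b', steps beta c b b' -> steps beta c (App a b) (App a b').
Proof. intros. eapply (steps_map beta beta (fun x => App a x)); eauto. intros; constructor; auto. Qed.
Lemma steps_lam : forall c a a', steps beta c a a' -> steps beta c (Lam a) (Lam a').
Proof. intros. eapply (steps_map beta beta Lam); eauto. intros; constructor; auto. Qed.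
Lemma steps_app : forall c1 c2 a a' b b', steps beta c1 a a' -> steps beta c2 b b' ->
  steps beta (c1 + c2) (App a b) (App a' b').
Proof. intros. eapply steps_trans. apply steps_appl; eauto. apply steps_appr; eauto. Qed.

Lemma steps_subst_r : forall c P P' k Q, steps beta c P P' -> steps beta c (subst k Q P) (subst k Q P').
Proof. intros. eapply (steps_map beta beta (subst k Q)); eauto. intros; apply beta_subst; auto. Qed.
Lemma steps_lift : forall c P P' d k, steps beta c P P' -> steps beta c (lift d k P) (lift d k P').
Proof. intros. eapply (steps_map beta beta (lift d k)); eauto. intros; apply beta_lift; auto. Qed.

Lemma steps_subst_l : forall P b Q Q' k, steps beta b Q Q' ->
  steps beta (occ k P * b) (subst k Q P) (subst k Q' P).
Proof. induction P; intros; simpl.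
  - bdes; simpl; try (subst; rewrite Nat.add_0_r; apply steps_lift; auto); try constructor;
    exfalso; lia.
  - rewrite Nat.mul_add_distr_r. apply steps_app; auto.
  - apply steps_lam; auto.
Qed.

Lemma nf_no_beta : forall Q X, beta Q X -> beta_nf Q -> False.
Proof. induction 1; simpl; intros; auto.
  - destruct a; simpl in *; tauto.
  - destruct a; simpl in *; tauto.
Qed.

Lemma nf_steps0 : forall b Q X, steps beta b Q X -> beta_nf Q -> b = 0.
Proof. intros. inversion H; auto. subst. exfalso; eapply nf_no_beta; eauto. Qed.


Inductive par : term -> term -> Prop :=
| p_var x : par (Var x) (Var x)
| p_app a a' b b' : par a a' -> par b b' -> par (App a b) (App a' b')
| p_lam a a' : par a a' -> par (Lam a) (Lam a')
| p_beta a a' b b' : par a a' -> par b b' -> par (App (Lam a) b) (subst 0 b' a').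

Lemma par_refl : forall t, par t t.
Proof. induction t; constructor; auto. Qed.

Lemma par_lift : forall M N, par M N -> forall d c, par (lift d c M) (lift d c N).
Proof. induction 1; intros; simpl; try (constructor; auto; fail).
  - destruct (Nat.ltb x c); constructor.
  - rewrite lift_subst0. apply p_beta; auto. Qed.

Lemma par_subst : forall M M', par M M' -> forall N N' k, par N N' -> par (subst k N M) (subst k N' M').
Proof. induction 1; intros; simpl; try (constructor; auto; fail).
  - bdes; try constructor. apply par_lift; auto.
  - rewrite subst0_subst. apply p_beta; auto. Qed.

Fixpoint cd (t : term) : term :=
  match t with
  | Var x => Var x
  | App (Lam a) b => subst 0 (cd b) (cd a)
  | App a b => App (cd a) (cd b)
  | Lam a => Lam (cd a)
  end.

Lemma par_cd : forall M N, par M N -> par N (cd M).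
Proof. induction 1; simpl.
  - constructor.
  - destruct a; try (constructor; auto; fail).
    inversion H; subst. simpl in IHpar1. inversion IHpar1; subst. apply p_beta; auto.
  - constructor; auto.
  - apply par_subst; auto.
Qed.

Lemma beta_par : forall M N, beta M N -> par M N.
Proof. induction 1; try (constructor; auto using par_refl; fail).
Qed.

Lemma red_refl : forall M, red M M.
Proof. intros; exists 0; constructor. Qed.
Lemma red_trans : forall M N L, red M N -> red N L -> red M L.
Proof. intros M N L [a H1] [b H2]. exists (a+b). eapply steps_trans; eauto. Qed.
Lemma red_step : forall M N, beta M N -> red M N.
Proof. intros. exists 1. apply steps_one; auto. Qed.
Lemma red_app : forall a a' b b', red a a' -> red b b' -> red (App a b) (App a' b').
Proof. intros a a' b b' [x H] [y H']. exists (x+y). apply steps_app; auto. Qed.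
Lemma red_lam : forall a a', red a a' -> red (Lam a) (Lam a').
Proof. intros a a' [x H]. exists x. apply steps_lam; auto. Qed.

Lemma par_red : forall M N, par M N -> red M N.
Proof. induction 1.
  - apply red_refl.
  - apply red_app; auto.
  - apply red_lam; auto.
  - eapply red_trans. apply red_app. apply red_lam. eauto. eauto.
    apply red_step. apply beta_redex.
Qed.

Inductive pstar : term -> term -> Prop :=
| ps_refl t : pstar t t
| ps_step t u v : par t u -> pstar u v -> pstar t v.

Lemma strip : forall M N2, pstar M N2 -> forall N1, par M N1 -> exists Z, pstar N1 Z /\ par N2 Z.
Proof. induction 1; intros.
  - exists N1. split; [constructor| auto].
  - assert (par u (cd t)) by (apply par_cd; auto).
    assert (par N1 (cd t)) by (apply par_cd; auto).
    destruct (IHpstar _ H2) as [Z [HZ1 HZ2]].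
    exists Z. split; auto. econstructor; eauto.
Qed.

Lemma pstar_conf : forall M A, pstar M A -> forall B, pstar M B -> exists Z, pstar A Z /\ pstar B Z.
Proof. induction 1; intros.
  - exists B; split; auto. constructor.
  - destruct (strip _ _ H1 _ H) as [Z [HZ1 HZ2]].
    destruct (IHpstar _ HZ1) as [W [HW1 HW2]]. exists W; split; auto. econstructor; eauto.
Qed.

Lemma pstar_red : forall M N, pstar M N -> red M N.
Proof. induction 1. apply red_refl. eapply red_trans; eauto. apply par_red; auto. Qed.

Lemma steps_pstar : forall c M N, steps beta c M N -> pstar M N.
Proof. induction 1. constructor. econstructor; eauto. apply beta_par; auto. Qed.

Lemma red_conf : forall M A B, red M A -> red M B -> exists Z, red A Z /\ red B Z.
Proof. intros M A B [a HA] [b HB].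
  destruct (pstar_conf _ _ (steps_pstar _ _ _ HA) _ (steps_pstar _ _ _ HB)) as [Z [H1 H2]].
  exists Z; split; apply pstar_red; auto. Qed.

Lemma CR : forall M N, beta_eq M N -> exists L, red M L /\ red N L.
Proof. induction 1.
  - exists y; split; [apply red_step; auto | apply red_refl].
  - exists x; split; apply red_refl.
  - destruct IHclos_refl_sym_trans as [L [H1 H2]]. exists L; auto.
  - destruct IHclos_refl_sym_trans1 as [L1 [H1 H2]].
    destruct IHclos_refl_sym_trans2 as [L2 [H3 H4]].
    destruct (red_conf _ _ _ H2 H3) as [Z [H5 H6]].
    exists Z; split; eapply red_trans; eauto.
Qed.


Lemma apps_app : forall l h a, apps h (l ++ [a]) = App (apps h l) a.
Proof. intros. unfold apps. rewrite fold_left_app. reflexivity. Qed.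
Lemma apps_cons : forall l h a, apps h (a :: l) = apps (App h a) l.
Proof. reflexivity. Qed.

Fixpoint unapps (t : term) : term * list term :=
  match t with
  | App a b => let (h, l) := unapps a in (h, l ++ [b])
  | _ => (t, [])
  end.

Lemma unapps_apps : forall args X, unapps (apps X args) = (fst (unapps X), snd (unapps X) ++ args).
Proof. induction args using rev_ind; intros.
  - simpl. rewrite app_nil_r. destruct (unapps X); auto.
  - rewrite apps_app. simpl. rewrite IHargs. rewrite app_assoc. auto.
Qed.

Fixpoint unlams (t : term) : nat * term :=
  match t with
  | Lam a => let (n, b) := unlams a in (S n, b)
  | _ => (0, t)
  end.

Definition is_lam t := match t with Lam _ => True | _ => False end.

Lemma unlams_lams : forall n T, ~ is_lam T -> unlams (lams n T) = (n, T).
Proof. induction n; intros; simpl.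
  - destruct T; simpl in *; auto; tauto.
  - rewrite IHn; auto.
Qed.

Lemma apps_not_lam : forall args X, ~ is_lam X -> ~ is_lam (apps X args).
Proof. induction args using rev_ind; intros; auto. rewrite apps_app. simpl. auto. Qed.

Lemma hnf_inj : forall n y args n' y' args', hnf n y args = hnf n' y' args' ->
  n = n' /\ y = y' /\ args = args'.
Proof. unfold hnf; intros.
  assert (H1 := f_equal unlams H).
  rewrite !unlams_lams in H1 by (apply apps_not_lam; simpl; auto). inversion H1; subst.
  assert (H2 := f_equal unapps H3). rewrite !unapps_apps in H2. simpl in H2. inversion H2; auto.
Qed.

Lemma head_red_inv : forall R M M', head_red R M M' -> exists n P Q args, R P Q /\
  M = lams n (apps (App (Lam P) Q) args) /\ M' = lams n (apps (subst 0 Q P) args).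
Proof. induction 1.
  - exists 0, P, Q, []. auto.
  - destruct IHhead_red as [n [P [Q [args [HR [E1 E2]]]]]].
    destruct n; simpl in E1; [|discriminate].
    exists 0, P, Q, (args ++ [c]). simpl in *. rewrite !apps_app. rewrite <- E1, <- E2. auto.
  - destruct IHhead_red as [n [P [Q [args [HR [E1 E2]]]]]].
    exists (S n), P, Q, args. simpl. subst. auto.
Qed.

Lemma apps_app_form : forall args a b, exists c d, apps (App a b) args = App c d.
Proof. induction args using rev_ind; intros. simpl; eauto. rewrite apps_app; eauto. Qed.

Lemma head_red_form : forall (R : term -> term -> Prop) n P Q args, R P Q ->
  head_red R (lams n (apps (App (Lam P) Q) args)) (lams n (apps (subst 0 Q P) args)).
Proof. induction n; intros; simpl.
  - induction args using rev_ind; simpl.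
    + apply hr_redex; auto.
    + rewrite !apps_app. destruct (apps_app_form args (Lam P) Q) as [c [d E]].
      rewrite E in *. apply hr_app; auto.
  - apply hr_lam; auto.
Qed.

Lemma hnf_irred : forall R n y args X, head_red R (hnf n y args) X -> False.
Proof. intros. apply head_red_inv in H. destruct H as [n' [P [Q [args' [_ [E _]]]]]].
  unfold hnf in E. assert (H1 := f_equal unlams E).
  rewrite !unlams_lams in H1 by (apply apps_not_lam; simpl; auto). inversion H1; subst.
  assert (H3 := f_equal unapps H2). rewrite !unapps_apps in H3. simpl in H3. inversion H3.
Qed.

Lemma head_det : forall M M1, head_step M M1 -> forall M2, head_step M M2 -> M1 = M2.
Proof. induction 1; intros M2 H2; inversion H2; subst; auto; f_equal; auto. Qed.

Lemma steps_det : forall k M H1, steps head_step k M H1 -> (forall X, ~ head_step H1 X) ->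
  forall k' H2, steps head_step k' M H2 -> (forall X, ~ head_step H2 X) -> k = k' /\ H1 = H2.
Proof. induction 1 as [t|k t u v Htu Hs IH]; intros Hirr k' H2 Hs2 Hirr2.
  - inversion Hs2 as [|k0 t0 u0 v0 Ht0 Hs0]; subst; auto. exfalso; eapply Hirr; eauto.
  - inversion Hs2 as [|k0 t0 u0 v0 Ht0 Hs0]; subst. exfalso; eapply Hirr2; eauto.
    assert (u = u0) by (eapply head_det; eauto). subst.
    destruct (IH Hirr _ _ Hs0 Hirr2); auto.
Qed.

Lemma head_to_hnf_unique : forall M k n y args k' n' y' args',
  head_to_hnf M k n y args -> head_to_hnf M k' n' y' args' ->
  k = k' /\ n = n' /\ y = y' /\ args = args'.
Proof. unfold head_to_hnf; intros.
  destruct (steps_det _ _ _ H (fun X h => hnf_irred _ _ _ _ _ h) _ _ H0 (fun X h => hnf_irred _ _ _ _ _ h)).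
  apply hnf_inj in H2. tauto.
Qed.

Lemma hnf_data_some : forall M k n y args, head_to_hnf M k n y args ->
  hnf_data M = Some (k, n, y, args).
Proof. intros. unfold hnf_data. destruct (excluded_middle_informative _) as [H1|H1].
  - destruct (constructive_indefinite_description _ H1) as [k' H2].
    destruct (constructive_indefinite_description _ H2) as [n' H3].
    destruct (constructive_indefinite_description _ H3) as [y' H4].
    destruct (constructive_indefinite_description _ H4) as [args' H5].
    destruct (head_to_hnf_unique _ _ _ _ _ _ _ _ _ H H5) as [? [? [? ?]]]. subst; auto.
  - exfalso. apply H1. exists k, n, y, args. auto.
Qed.

Lemma hnf_data_none : forall M, ~ has_hnf M -> hnf_data M = None.
Proof. intros. unfold hnf_data. destruct (excluded_middle_informative _) as [H1|H1]; tauto. Qed.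

Lemma hnf_data_cases : forall M, (hnf_data M = None /\ ~ has_hnf M) \/
  exists k n y args, hnf_data M = Some (k,n,y,args) /\ head_to_hnf M k n y args.
Proof. intros. destruct (classic (has_hnf M)).
  - right. destruct H as [k [n [y [args H]]]]. exists k, n, y, args. split; auto. apply hnf_data_some; auto.
  - left. split; auto. apply hnf_data_none; auto.
Qed.

Section SP.
Variable y : nat.
Fixpoint sp (ann : option nat) (n : nat) (rargs : list term) (q : position) {struct q} : option node :=
  match n with
  | S n' => match q with
            | [] => Some (LLam, ann)
            | D0 :: q' => sp None n' rargs q'
            | _ => None
            end
  | 0 => match rargs with
         | [] => match q with [] => Some (LVar y, ann) | _ => None end
         | A :: rargs' => match q with
                          | [] => Some (LApp, ann)
                          | D1 :: q' => sp None 0 rargs' q'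
                          | D2 :: q' => BTc A q'
                          | _ => None
                          end
         end
  end.
End SP.

Lemma BTc_eq : forall M p, BTc M p = match hnf_data M with
  | None => match p with [] => Some (LBot, None) | _ => None end
  | Some (k, n, y, args) => sp y (Some k) n (rev args) p end.
Proof. intros. destruct p; simpl; destruct (hnf_data M) as [[[[k n] y] args]|]; reflexivity. Qed.


Inductive wh : term -> term -> Prop :=
| wh_beta P Q : wh (App (Lam P) Q) (subst 0 Q P)
| wh_app a a' b : wh a a' -> wh (App a b) (App a' b).

Inductive star (r : term -> term -> Prop) : term -> term -> Prop :=
| sr_refl t : star r t t
| sr_step t u v : r t u -> star r u v -> star r t v.

Lemma star_trans : forall r x y, star r x y -> forall z, star r y z -> star r x z.
Proof. induction 1; intros; auto. econstructor; eauto. Qed.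

Lemma star_map : forall (r r' : term -> term -> Prop) (f : term -> term),
  (forall x y, r x y -> r' (f x) (f y)) -> forall x y, star r x y -> star r' (f x) (f y).
Proof. induction 2; econstructor; eauto. Qed.

Lemma wh_lift : forall M N, wh M N -> forall d c, wh (lift d c M) (lift d c N).
Proof. induction 1; intros; simpl.
  - rewrite lift_subst0. constructor.
  - constructor; auto. Qed.

Lemma wh_subst : forall M N, wh M N -> forall k s, wh (subst k s M) (subst k s N).
Proof. induction 1; intros; simpl.
  - rewrite subst0_subst. constructor.
  - constructor; auto. Qed.

Inductive std : term -> term -> Prop :=
| sd_var M x : star wh M (Var x) -> std M (Var x)
| sd_lam M P P' : star wh M (Lam P) -> std P P' -> std M (Lam P')
| sd_app M P Q P' Q' : star wh M (App P Q) -> std P P' -> std Q Q' -> std M (App P' Q').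

Lemma std_refl : forall M, std M M.
Proof. induction M; econstructor; eauto; constructor. Qed.

Lemma std_wh : forall M M', star wh M M' -> forall N, std M' N -> std M N.
Proof. intros. inversion H0; subst; econstructor; eauto; eapply star_trans; eauto. Qed.

Lemma std_lift : forall M N, std M N -> forall d c, std (lift d c M) (lift d c N).
Proof. induction 1; intros; simpl.
  - assert (star wh (lift d c M) (lift d c (Var x))) by exact (star_map wh wh (lift d c) (fun a b h => wh_lift a b h d c) _ _ H).
    simpl in H0. destruct (Nat.ltb x c); constructor; auto.
  - econstructor; eauto. exact (star_map wh wh (lift d c) (fun a b h => wh_lift a b h d c) _ _ H).
  - econstructor; eauto. exact (star_map wh wh (lift d c) (fun a b h => wh_lift a b h d c) _ _ H).
Qed.

Lemma std_subst : forall M M', std M M' -> forall N N' k, std N N' -> std (subst k N M) (subst k N' M').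
Proof. induction 1; intros; simpl.
  - assert (star wh (subst k N M) (subst k N (Var x))) by exact (star_map wh wh (subst k N) (fun a b h => wh_subst a b h k N) _ _ H).
    simpl in H1. bdes; try (constructor; auto; fail).
    eapply std_wh; eauto. apply std_lift; auto.
  - econstructor; eauto. exact (star_map wh wh (subst k N) (fun a b h => wh_subst a b h k N) _ _ H).
  - econstructor; eauto. exact (star_map wh wh (subst k N) (fun a b h => wh_subst a b h k N) _ _ H).
Qed.

Lemma std_step : forall M N, std M N -> forall N', beta N N' -> std M N'.
Proof. induction 1; intros N0 HB; inversion HB; subst.
  - econstructor; eauto.
  - unfold beta_contract. inversion H0; subst.
    eapply std_wh. eapply star_trans. exact H.
    eapply star_trans. apply (star_map wh wh (fun x => App x Q)). intros; constructor; auto. exact H3.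
    eapply sr_step. constructor. constructor.
    apply std_subst; auto.
  - econstructor; eauto.
  - econstructor; eauto.
Qed.

Lemma red_std : forall M N, red M N -> std M N.
Proof. intros M N [c H]. cut (forall X, std X M -> std X N). intro C; apply C, std_refl.
  induction H; intros; auto. apply IHsteps. eapply std_step; eauto. Qed.

Lemma wh_is_app : forall M N, wh M N -> exists a b, M = App a b.
Proof. destruct 1; eauto. Qed.

Lemma wh_head : forall M N, wh M N -> head_step M N.
Proof. induction 1. apply hr_redex; exact I.
  destruct (wh_is_app _ _ H) as [x [y E]]. subst. apply hr_app; auto. Qed.

Lemma std_apps_var : forall args y M, std M (apps (Var y) args) ->
  exists args', star wh M (apps (Var y) args').
Proof. induction args using rev_ind; intros.
  - simpl in H. inversion H; subst. exists []. auto.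
  - rewrite apps_app in H. inversion H; subst.
    destruct (IHargs _ _ H4) as [args' Ha]. exists (args' ++ [Q]). rewrite apps_app.
    eapply star_trans; eauto. apply (star_map wh wh (fun t => App t Q)); auto. intros; constructor; auto.
Qed.

Lemma star_steps : forall r x y, star r x y -> exists k, steps r k x y.
Proof. induction 1. exists 0; constructor. destruct IHstar as [k H1]. exists (S k); econstructor; eauto. Qed.

Lemma std_hnf : forall n y args M, std M (hnf n y args) -> has_hnf M.
Proof. unfold hnf. induction n; intros; simpl in *.
  - destruct (std_apps_var _ _ _ H) as [args' Ha].
    apply (star_map wh head_step (fun x => x)) in Ha; [|apply wh_head].
    destruct (star_steps _ _ _ Ha) as [k Hk]. exists k, 0, y, args'. exact Hk.
  - inversion H as [| M0 P P' Hw Hs | ]; subst. destruct (IHn _ _ _ Hs) as [k [n' [y' [args' Hh]]]].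
    apply (star_map wh head_step (fun x => x)) in Hw; [|apply wh_head].
    destruct (star_steps _ _ _ Hw) as [k0 Hk0].
    exists (k0 + k), (S n'), y', args'. unfold head_to_hnf in *. eapply steps_trans. exact Hk0.
    unfold hnf in *; simpl. eapply (steps_map head_step head_step Lam). intros; apply hr_lam; auto. exact Hh.
Qed.

Lemma red_hnf_back : forall M N, red M N -> has_hnf N -> has_hnf M.
Proof. intros M N HR [k [n [y [args H]]]].
  assert (red M (hnf n y args)).
  { eapply red_trans; eauto. exists k. eapply steps_incl; [|exact H].
    intros. clear -H0. induction H0; constructor; auto. }
  apply red_std in H0. eapply std_hnf; eauto.
Qed.


Inductive F3 (P : term -> term -> nat -> Prop) : list term -> list term -> nat -> Prop :=
| F3nil : F3 P [] [] 0
| F3cons a b c l1 l2 s : P a b c -> F3 P l1 l2 s -> F3 P (a :: l1) (b :: l2) (c + s).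

Definition listred c l1 l2 := F3 (fun a b c => steps beta c a b) l1 l2 c.

Lemma F3_impl : forall (P P' : term -> term -> nat -> Prop), (forall a b c, P a b c -> P' a b c) ->
  forall l1 l2 s, F3 P l1 l2 s -> F3 P' l1 l2 s.
Proof. induction 2; constructor; auto. Qed.

Lemma F3_app : forall P l1 l2 s l1' l2' s', F3 P l1 l2 s -> F3 P l1' l2' s' -> F3 P (l1 ++ l1') (l2 ++ l2') (s + s').
Proof. induction 1; intros; simpl; auto. rewrite <- Nat.add_assoc. constructor; auto. Qed.

Lemma F3_rev : forall P l1 l2 s, F3 P l1 l2 s -> F3 P (rev l1) (rev l2) s.
Proof. induction 1; simpl. constructor. rewrite Nat.add_comm. apply F3_app; auto.
  rewrite <- (Nat.add_0_r c). constructor; auto. constructor. Qed.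

Lemma lr_refl : forall l, listred 0 l l.
Proof. induction l. constructor. change 0 with (0 + 0). constructor; auto. constructor. Qed.

Lemma lr_trans : forall a l1 l2, listred a l1 l2 -> forall b l3, listred b l2 l3 -> listred (a + b) l1 l3.
Proof. unfold listred. induction 1 as [|a0 b0 c0 l1 l2 s Hab Hl IH]; intros b l3 H';
  inversion H' as [|a1 b1 c1 l1' l2' s1 Hb1 Hl1]; subst; simpl; auto.
  replace (c0 + s + (c1 + s1)) with ((c0 + c1) + (s + s1)) by lia.
  constructor. eapply steps_trans; eauto. apply IH; auto. Qed.

Lemma beta_lams_inv : forall n T Y, beta (lams n T) Y -> exists T', Y = lams n T' /\ beta T T'.
Proof. induction n; simpl; intros. eauto. inversion H; subst. destruct (IHn _ _ H1) as [T' [E B]].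
  subst. eauto. Qed.

Lemma beta_apps_inv : forall args X Y, ~ is_lam X -> beta (apps X args) Y ->
  (exists X', beta X X' /\ Y = apps X' args) \/ (exists args', listred 1 args args' /\ Y = apps X args').
Proof. induction args using rev_ind; intros.
  - left. simpl in *. eauto.
  - rewrite apps_app in H0. inversion H0; subst.
    + exfalso. apply (apps_not_lam args X H). rewrite <- H2. simpl; auto.
    + destruct (IHargs _ _ H H4) as [[X' [B E]]|[args' [L E]]]; subst.
      * left. exists X'. rewrite apps_app. auto.
      * right. exists (args' ++ [x]). rewrite apps_app. split; auto.
        unfold listred. apply (F3_app _ _ _ 1 _ _ 0); auto.
        apply (F3cons _ _ _ 0 _ _ 0). constructor. constructor.
    + right. exists (args ++ [b']). rewrite apps_app. split; auto.
      unfold listred. apply (F3_app _ _ _ 0 _ _ 1). apply lr_refl.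
      apply (F3cons _ _ _ 1 _ _ 0). apply steps_one; auto. constructor.
Qed.

Lemma steps_lams : forall n c T T', steps beta c T T' -> steps beta c (lams n T) (lams n T').
Proof. induction n; simpl; intros; auto. apply steps_lam; auto. Qed.

Lemma steps_apps_head : forall args c X X', steps beta c X X' -> steps beta c (apps X args) (apps X' args).
Proof. induction args; simpl; intros; auto. apply IHargs. apply steps_appl; auto. Qed.

Lemma steps_apps_args : forall c args args' X, listred c args args' -> steps beta c (apps X args) (apps X args').
Proof. unfold listred. intros c args args' X H. revert X. induction H; intros; simpl. constructor.
  eapply steps_trans. apply steps_apps_head. apply steps_appr. eauto. apply IHF3. Qed.

Definition HR n P Q args := lams n (apps (App (Lam P) Q) args).
Definition HC n T args := lams n (apps T args).

Lemma HR_step : forall n P Q args Y, beta (HR n P Q args) Y ->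
  Y = HC n (subst 0 Q P) args \/ (exists P', beta P P' /\ Y = HR n P' Q args) \/
  (exists Q', beta Q Q' /\ Y = HR n P Q' args) \/ (exists args', listred 1 args args' /\ Y = HR n P Q args').
Proof. unfold HR, HC; intros. apply beta_lams_inv in H. destruct H as [T' [E B]]. subst.
  apply beta_apps_inv in B; [|simpl; auto]. destruct B as [[X' [B E]]|[args' [L E]]]; subst.
  - inversion B; subst.
    + left. reflexivity.
    + inversion H2; subst. right; left. eauto.
    + right; right; left. eauto.
  - right; right; right; eauto.
Qed.

Lemma HR_decomp : forall c M Y, steps beta c M Y -> forall n P Q args, M = HR n P Q args ->
  exists a b e P1 Q1 args1, steps beta a P P1 /\ steps beta b Q Q1 /\ listred e args args1 /\
   ((Y = HR n P1 Q1 args1 /\ c = a + b + e) \/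
    (exists c2, steps beta c2 (HC n (subst 0 Q1 P1) args1) Y /\ c = a + b + e + 1 + c2)).
Proof. induction 1; intros n0 P Q args E; subst.
  - exists 0, 0, 0, P, Q, args. split; [constructor|]. split; [constructor|]. split; [apply lr_refl|]. left; auto.
  - apply HR_step in H. destruct H as [E|[[P' [B E]]|[[Q' [B E]]|[args' [L E]]]]]; subst.
    + exists 0, 0, 0, P, Q, args. split; [constructor|]. split; [constructor|]. split; [apply lr_refl|]. right. exists k. split; auto.
    + destruct (IHsteps _ _ _ _ eq_refl) as [a [b [e [P1 [Q1 [args1 [H1 [H2 [H3 H4]]]]]]]]].
      exists (S a), b, e, P1, Q1, args1. repeat split; auto. econstructor; eauto.
      destruct H4 as [[? ?]|[c2 [? ?]]]; [left|right]; eauto. split; auto; lia. exists c2; split; auto; lia.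
    + destruct (IHsteps _ _ _ _ eq_refl) as [a [b [e [P1 [Q1 [args1 [H1 [H2 [H3 H4]]]]]]]]].
      exists a, (S b), e, P1, Q1, args1. repeat split; auto. econstructor; eauto.
      destruct H4 as [[? ?]|[c2 [? ?]]]; [left|right]; eauto. split; auto; lia. exists c2; split; auto; lia.
    + destruct (IHsteps _ _ _ _ eq_refl) as [a [b [e [P1 [Q1 [args1 [H1 [H2 [H3 H4]]]]]]]]].
      exists a, b, (1 + e), P1, Q1, args1. repeat split; auto. eapply lr_trans; eauto.
      destruct H4 as [[? ?]|[c2 [? ?]]]; [left|right]; eauto. split; auto; lia. exists c2; split; auto; lia.
Qed.

Lemma HC_chain : forall n P Q args a b e P1 Q1 args1,
  steps beta a P P1 -> steps beta b Q Q1 -> listred e args args1 ->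
  steps beta (e + occ 0 P * b + a) (HC n (subst 0 Q P) args) (HC n (subst 0 Q1 P1) args1).
Proof. intros. unfold HC. apply steps_lams. rewrite <- Nat.add_assoc. eapply steps_trans.
  apply steps_apps_args; eauto. apply steps_apps_head. eapply steps_trans.
  apply steps_subst_l; eauto. apply steps_subst_r; auto. Qed.



Lemma fwd_core : forall (R : term -> term -> Prop) M M' c N, head_red R M M' -> steps beta c M N ->
  exists P Q Q1 b, R P Q /\ steps beta b Q Q1 /\
   ((exists N' a e, head_step N N' /\ steps beta (e + occ 0 P * b + a) M' N' /\ c = a + b + e)
    \/ (exists a e c2, steps beta (e + occ 0 P * b + a + c2) M' N /\ c = a + b + e + 1 + c2)).
Proof. intros. apply head_red_inv in H. destruct H as [n [P [Q [args [HRPQ [E1 E2]]]]]]. subst.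
  destruct (HR_decomp _ _ _ H0 n P Q args eq_refl) as [a [b [e [P1 [Q1 [args1 [H1 [H2 [H3 H4]]]]]]]]].
  exists P, Q, Q1, b. split; auto. split; auto.
  assert (HCc := HC_chain n P Q args a b e P1 Q1 args1 H1 H2 H3).
  destruct H4 as [[E C]|[c2 [S C]]]; subst.
  - left. exists (HC n (subst 0 Q1 P1) args1), a, e. split; auto.
    apply head_red_form. exact I.
  - right. exists a, e, c2. split; auto. eapply steps_trans; eauto.
Qed.

Lemma fwd_gen : forall M M' c N, head_step M M' -> steps beta c M N ->
  (exists N' c', head_step N N' /\ steps beta c' M' N') \/ (exists c', steps beta c' M' N).
Proof. intros. destruct (fwd_core _ _ _ _ _ H H0) as [P [Q [Q1 [b [_ [_ [[N' [a [e [? [? ?]]]]]|[a [e [c2 [? ?]]]]]]]]]]].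
  left; eauto. right; eauto. Qed.

Lemma fwd_simple : forall M M' c N, head_red simple_redex M M' -> steps beta c M N ->
  (exists N' c', head_step N N' /\ steps beta c' M' N' /\ c' <= c) \/ (exists c', steps beta c' M' N /\ c' < c).
Proof. intros. destruct (fwd_core _ _ _ _ _ H H0) as [P [Q [Q1 [b [HS [Hb X]]]]]].
  assert (occ 0 P * b <= b).
  { destruct HS as [HS|HS]. destruct (occ 0 P) as [|[|]]; lia.
    rewrite (nf_steps0 _ _ _ Hb HS). lia. }
  destruct X as [[N' [a [e [? [? ?]]]]]|[a [e [c2 [? ?]]]]].
  - left. exists N', (e + occ 0 P * b + a). repeat split; auto. lia.
  - right. eexists. split; eauto. lia.
Qed.

Lemma hnf_red_inv : forall c n y args Y, steps beta c (hnf n y args) Y ->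
  exists args', Y = hnf n y args' /\ listred c args args'.
Proof. intros c n y args Y H. remember (hnf n y args) as M. revert args HeqM.
  induction H; intros; subst.
  - exists args. split; auto. apply lr_refl.
  - unfold hnf in H. apply beta_lams_inv in H. destruct H as [T' [E B]]. subst.
    apply beta_apps_inv in B; [|simpl; auto]. destruct B as [[X' [B _]]|[args' [L E]]]. inversion B.
    subst. destruct (IHsteps args' eq_refl) as [args2 [E2 L2]]. exists args2. split; auto.
    change (S k) with (1 + k). eapply lr_trans; eauto.
Qed.

Lemma fwd_hnf_gen : forall k M n y args, steps head_step k M (hnf n y args) ->
  forall c N, steps beta c M N -> exists j args' cf, steps head_step j N (hnf n y args') /\
   listred cf args args' /\ j <= k.
Proof. induction k; intros M n y args H c N HN.
  - inversion H; subst. destruct (hnf_red_inv _ _ _ _ _ HN) as [args' [E L]]. subst.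
    exists 0, args', c. repeat split; auto. constructor.
  - inversion H; subst. destruct (fwd_gen _ _ _ _ H1 HN) as [[N' [c' [Hh Hs]]]|[c' Hs]].
    + destruct (IHk _ _ _ _ H2 _ _ Hs) as [j [args' [cf [? [? ?]]]]].
      exists (S j), args', cf. repeat split; auto. econstructor; eauto. lia.
    + destruct (IHk _ _ _ _ H2 _ _ Hs) as [j [args' [cf [? [? ?]]]]].
      exists j, args', cf. repeat split; auto.
Qed.

Lemma listred_le : forall c l1 l2, listred c l1 l2 -> True.
Proof. auto. Qed.

Lemma fwd_hnf_simple : forall k M n y args, steps (head_red simple_redex) k M (hnf n y args) ->
  forall c N, steps beta c M N -> exists j args' cf, steps head_step j N (hnf n y args') /\
   listred cf args args' /\ j <= k /\ k <= j + (c - cf) /\ cf <= c.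
Proof. induction k; intros M n y args H c N HN.
  - inversion H; subst. destruct (hnf_red_inv _ _ _ _ _ HN) as [args' [E L]]. subst.
    exists 0, args', c. repeat split; auto. constructor. lia.
  - inversion H; subst. destruct (fwd_simple _ _ _ _ H1 HN) as [[N' [c' [Hh [Hs Hc]]]]|[c' [Hs Hc]]].
    + destruct (IHk _ _ _ _ H2 _ _ Hs) as [j [args' [cf [? [? [? [? ?]]]]]]].
      exists (S j), args', cf. repeat split; auto. econstructor; eauto. lia. lia. lia.
    + destruct (IHk _ _ _ _ H2 _ _ Hs) as [j [args' [cf [? [? [? [? ?]]]]]]].
      exists j, args', cf. repeat split; auto; lia.
Qed.


Definition annle (a2 a1 : option nat) : Prop :=
  match a2, a1 with None, None => True | Some k2, Some k1 => k2 <= k1 | _, _ => False end.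
Definition agreeGE (o1 o2 : option node) : Prop :=
  match o1, o2 with
  | None, None => True
  | Some (l1, a1), Some (l2, a2) => l1 = l2 /\ annle a2 a1
  | _, _ => False end.

Lemma sp_agree : forall N q, length q <= N -> forall y ann1 ann2 n r1 r2 s, annle ann2 ann1 ->
  F3 (fun A B _ => forall q', length q' < N -> agreeGE (BTc A q') (BTc B q')) r1 r2 s ->
  agreeGE (sp y ann1 n r1 q) (sp y ann2 n r2 q).
Proof. intros N. induction q as [|d q IH]; intros Hl y ann1 ann2 n r1 r2 s Ha HF.
  - destruct n; simpl. destruct HF; simpl; auto. auto.
  - simpl in Hl. destruct n; simpl.
    + destruct HF as [|A B c r1 r2 s HAB HF]; simpl; auto.
      destruct d; simpl; auto; try (apply HAB; lia).
      eapply IH; eauto. lia. simpl; auto.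
    + destruct d; simpl; auto. eapply IH; eauto. lia. simpl; auto.
Qed.

Theorem red_agree : forall N M L p, red M L -> length p < N -> agreeGE (BTc M p) (BTc L p).
Proof. induction N; intros M L p HR Hp. lia.
  rewrite !BTc_eq. destruct (hnf_data_cases M) as [[E1 H1]|[k [n [y [args [E1 H1]]]]]].
  - rewrite E1. assert (~ has_hnf L) by (intro; apply H1; eapply red_hnf_back; eauto).
    rewrite (hnf_data_none _ H). destruct p; simpl; auto.
  - rewrite E1. destruct HR as [c HR].
    destruct (fwd_hnf_gen _ _ _ _ _ H1 _ _ HR) as [j [args' [cf [Hj [Hl Hjk]]]]].
    rewrite (hnf_data_some L j n y args' Hj).
    eapply sp_agree with (N := N). lia. simpl; auto.
    apply F3_rev. eapply F3_impl; [|exact Hl]. simpl. intros. apply IHN; auto. exists c0; auto.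
Qed.

Definition deficit (o1 o2 : option node) : Prop :=
  match o1, o2 with Some (_, Some k1), Some (_, Some k2) => k2 < k1 | _, _ => False end.
Definition anndef (a1 a2 : option nat) : Prop :=
  match a1, a2 with Some k1, Some k2 => k2 < k1 | _, _ => False end.

Definition dir_eqb (d e : dir) : bool :=
  match d, e with D0, D0 | D1, D1 | D2, D2 => true | _, _ => false end.
Lemma dir_eqb_spec : forall d e, dir_eqb d e = true <-> d = e.
Proof. destruct d, e; simpl; split; congruence. Qed.

Definition col (d : dir) (S : list position) : list position :=
  flat_map (fun p => match p with e :: q => if dir_eqb d e then [q] else [] | [] => [] end) S.
Definition is_nilb (p : position) : bool := match p with [] => true | _ => false end.

Lemma col_in : forall d S q, In q (col d S) <-> In (d :: q) S.
Proof. intros. unfold col. rewrite in_flat_map. split.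
  - intros [p [Hp Hq]]. destruct p as [|e p]; simpl in Hq; [tauto|].
    destruct (dir_eqb d e) eqn:E; simpl in Hq; [|tauto]. apply dir_eqb_spec in E. subst.
    destruct Hq as [Hq|[]]; subst; auto.
  - intros H. exists (d :: q). split; auto. simpl. destruct d; simpl; auto.
Qed.

Lemma col_nodup : forall d S, NoDup S -> NoDup (col d S).
Proof. induction 1; simpl. constructor.
  destruct x as [|e q]; simpl; auto. destruct (dir_eqb d e) eqn:E; simpl; auto.
  apply dir_eqb_spec in E; subst. constructor; auto. rewrite col_in. auto. Qed.

Lemma col_cons : forall d e q S, col d ((e :: q) :: S) = if dir_eqb d e then q :: col d S else col d S.
Proof. intros. unfold col. simpl. destruct (dir_eqb d e); reflexivity. Qed.
Lemma col_nil : forall d S, col d ([] :: S) = col d S.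
Proof. reflexivity. Qed.

Lemma length_split : forall S, length S = length (filter is_nilb S) + length (col D0 S) + length (col D1 S) + length (col D2 S).
Proof. induction S as [|p S IH]; [reflexivity|]. destruct p as [|e q].
  - rewrite !col_nil. cbn [length filter is_nilb]. lia.
  - rewrite !col_cons. destruct e; cbn [length filter is_nilb dir_eqb]; lia.
Qed.

Lemma nil_part : forall S, NoDup S -> length (filter is_nilb S) <= 1 /\ (length (filter is_nilb S) >= 1 -> In [] S).
Proof. induction 1; simpl. split; lia. destruct x as [|e q]; simpl.
  - split; [|auto]. assert (filter is_nilb l = []).
    { destruct (filter is_nilb l) eqn:E; auto. exfalso. assert (In p (filter is_nilb l)) by (rewrite E; simpl; auto).
      apply filter_In in H1. destruct H1. destruct p; simpl in *; try discriminate. auto. }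
    rewrite H1; simpl; auto.
  - destruct IHNoDup; split; auto.
Qed.

Lemma empty_of : forall (S : list position) (P : position -> Prop), (forall q, In q S -> P q) -> (forall q, ~ P q) -> length S = 0.
Proof. destruct S; simpl; auto. intros. exfalso. eapply H0, H; eauto. Qed.

Lemma nil_le : forall S d, NoDup S -> (In [] S -> 1 <= d) -> length (filter is_nilb S) <= d.
Proof. intros. destruct (nil_part S H). destruct (length (filter is_nilb S)) eqn:E. lia.
  assert (1 <= d) by (apply H0, H2; lia). lia. Qed.

Definition lbl (y n : nat) (r : list term) : label :=
  match n with S _ => LLam | 0 => match r with [] => LVar y | _ => LApp end end.
Lemma sp_root : forall y a n r, sp y a n r [] = Some (lbl y n r, a).
Proof. destruct n; destruct r; reflexivity. Qed.

Lemma sp_count : forall N n y S ann1 ann2 r1 r2 s d, NoDup S ->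
  (forall p, In p S -> length p <= N /\ deficit (sp y ann1 n r1 p) (sp y ann2 n r2 p)) ->
  (anndef ann1 ann2 -> 1 <= d) ->
  F3 (fun A B c => forall S', NoDup S' -> (forall q, In q S' -> length q < N /\ deficit (BTc A q) (BTc B q)) -> length S' <= c) r1 r2 s ->
  length S <= d + s.
Proof. intros N. induction n as [|n IHn]; intros y S ann1 ann2 r1 r2 s d HN HS Hd HF;
  rewrite length_split;
  (assert (Hnil : length (filter is_nilb S) <= d) by
    (apply nil_le; auto; intro Hin; apply Hd; apply HS in Hin; destruct Hin as [_ Hin];
     rewrite !sp_root in Hin; exact Hin)).
  - revert S ann1 ann2 r2 s d HN HS Hd HF Hnil. induction r1 as [|A r1 IHr]; intros.
    + inversion HF; subst.
      rewrite (empty_of (col D0 S) (fun q => deficit (sp y ann1 0 [] (D0 :: q)) (sp y ann2 0 [] (D0 :: q)))).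
      rewrite (empty_of (col D1 S) (fun q => deficit (sp y ann1 0 [] (D1 :: q)) (sp y ann2 0 [] (D1 :: q)))).
      rewrite (empty_of (col D2 S) (fun q => deficit (sp y ann1 0 [] (D2 :: q)) (sp y ann2 0 [] (D2 :: q)))).
      lia. all: try (intros q Hq; apply col_in in Hq; apply HS in Hq; tauto). all: simpl; auto.
    + inversion HF as [|a b c l1 l2 s' HAB HF']; subst.
      rewrite (empty_of (col D0 S) (fun q => deficit (sp y ann1 0 (A :: r1) (D0 :: q)) (sp y ann2 0 (b :: l2) (D0 :: q)))).
      2: intros q Hq; apply col_in in Hq; apply HS in Hq; tauto. 2: simpl; auto.
      assert (length (col D1 S) <= 0 + s').
      { rewrite (length_split (col D1 S)). apply (IHr (col D1 S) None None l2 s' 0); auto.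
        - apply col_nodup; auto.
        - intros q Hq. apply col_in in Hq. apply HS in Hq. simpl in Hq. split; [lia|tauto].
        - simpl; tauto.
        - apply nil_le. apply col_nodup; auto. intro Hin. apply col_in in Hin. apply HS in Hin.
          destruct Hin as [_ Hin]. simpl in Hin. destruct r1, l2; simpl in Hin; tauto. }
      assert (length (col D2 S) <= c).
      { apply HAB. apply col_nodup; auto.
        intros q Hq. apply col_in in Hq. apply HS in Hq. simpl in Hq. split; [lia|tauto]. }
      lia.
  - rewrite (empty_of (col D1 S) (fun q => deficit (sp y ann1 (Datatypes.S n) r1 (D1 :: q)) (sp y ann2 (Datatypes.S n) r2 (D1 :: q)))).
    rewrite (empty_of (col D2 S) (fun q => deficit (sp y ann1 (Datatypes.S n) r1 (D2 :: q)) (sp y ann2 (Datatypes.S n) r2 (D2 :: q)))).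
    2,4: intros q Hq; apply col_in in Hq; apply HS in Hq; tauto. 2,3: simpl; auto.
    assert (length (col D0 S) <= 0 + s).
    { apply (IHn y (col D0 S) None None r1 r2 s 0); auto.
      - apply col_nodup; auto.
      - intros q Hq. apply col_in in Hq. apply HS in Hq. simpl in Hq. split; [lia|tauto].
      - simpl; tauto. }
    lia.
Qed.


Lemma head_red_any : forall R x y, head_red R x y -> head_step x y.
Proof. induction 1; constructor; auto. exact I. Qed.

Lemma simple_info : forall M k n y args, simple_term M -> head_to_hnf M k n y args ->
  steps (head_red simple_redex) k M (hnf n y args) /\ Forall simple_term args.
Proof. intros. destruct H as [M Hno | M k' n' y' args' Hs Hargs].
  - exfalso. apply Hno. exists k, n, y, args; auto.
  - assert (head_to_hnf M k' n' y' args') by (eapply steps_incl; [|exact Hs]; apply head_red_any).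
    destruct (head_to_hnf_unique _ _ _ _ _ _ _ _ _ H0 H) as [? [? [? ?]]]; subst.
    split; auto. apply Forall_forall; auto.
Qed.

Lemma lr_forall : forall c l1 l2, listred c l1 l2 -> Forall simple_term l1 ->
  F3 (fun A B c => simple_term A /\ steps beta c A B) l1 l2 c.
Proof. unfold listred. induction 1; intros; constructor. inversion H1; auto. apply IHF3. inversion H1; auto. Qed.

Theorem count_def : forall N M L c S, simple_term M -> steps beta c M L -> NoDup S ->
  (forall p, In p S -> length p < N /\ deficit (BTc M p) (BTc L p)) -> length S <= c.
Proof. induction N; intros M L c S HM HL HN HS.
  - destruct S as [|p S]; simpl; [lia|]. exfalso. destruct (HS p); simpl; auto; lia.
  - destruct (hnf_data_cases M) as [[E1 H1]|[k [n [y [args [E1 H1]]]]]].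
    + destruct S as [|p S]; simpl; [lia|]. exfalso. destruct (HS p) as [_ D]; simpl; auto.
      rewrite BTc_eq, E1 in D. destruct p; simpl in D; auto.
    + destruct (simple_info _ _ _ _ _ HM H1) as [Hsimp Hargs].
      destruct (fwd_hnf_simple _ _ _ _ _ Hsimp _ _ HL) as [j [args' [cf [Hj [Hl [Hjk [Hkj Hcf]]]]]]].
      assert (E2 := hnf_data_some L j n y args' Hj).
      assert (length S <= (c - cf) + cf).
      { apply (sp_count N n y S (Some k) (Some j) (rev args) (rev args') cf (c - cf)); auto.
        - intros p Hp. destruct (HS p Hp) as [Hlp D]. rewrite !BTc_eq, E1, E2 in D. split; auto; lia.
        - simpl. lia.
        - apply F3_rev. eapply F3_impl; [|apply lr_forall; eauto]. simpl. intros A B c0 [HA HB] S' HN' HS'.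
          eapply IHN; eauto. }
      lia.
Qed.

Fixpoint sumlen (S : list position) : nat := match S with [] => 0 | p :: S' => length p + sumlen S' end.
Lemma sumlen_in : forall S p, In p S -> length p <= sumlen S.
Proof. induction S; simpl; intros; [tauto|]. destruct H; subst; [lia|]. specialize (IHS _ H); lia. Qed.

Lemma build : forall (D : position -> Prop), (forall l, exists p, l <= length p /\ D p) ->
  forall m, exists Sx, NoDup Sx /\ length Sx = m /\ forall p, In p Sx -> D p.
Proof. intros D H. induction m.
  - exists []. repeat split; simpl; auto. constructor. tauto.
  - destruct IHm as [Sx [HN [HL HD]]]. destruct (H (S (sumlen Sx))) as [p [Hp Dp]].
    exists (p :: Sx). repeat split; simpl; auto.
    + constructor; auto. intro Hin. apply sumlen_in in Hin. lia.
    + intros q [E|E]; subst; auto.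
Qed.

Lemma eventually_ok : forall M L c, simple_term M -> steps beta c M L ->
  exists l, forall p, l <= length p -> ~ deficit (BTc M p) (BTc L p).
Proof. intros. apply NNPP. intro Hn.
  assert (forall l, exists p, l <= length p /\ deficit (BTc M p) (BTc L p)).
  { intro l. apply NNPP. intro Hl. apply Hn. exists l. intros p Hp Dp. apply Hl. eauto. }
  destruct (build _ H1 (Datatypes.S c)) as [Sx [HN [HL HD]]].
  assert (length Sx <= c).
  { apply (count_def (S (sumlen Sx)) M L c Sx); auto. intros p Hp. split; auto.
    apply sumlen_in in Hp. lia. }
  lia.
Qed.

Lemma agree_erase : forall o1 o2, agreeGE o1 o2 -> erase o1 = erase o2.
Proof. destruct o1 as [[l1 a1]|], o2 as [[l2 a2]|]; simpl; intros; try tauto. destruct H; subst; auto. Qed.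

Theorem theorem4p11 (M N : term) :
  simple_term M -> ~ ev_le (BTc M) (BTc N) -> ~ beta_eq M N.
Proof.
  intros HM Hev Heq. apply Hev. destruct (CR _ _ Heq) as [L [HML HNL]].
  assert (AM := fun p => red_agree (S (length p)) M L p HML (Nat.lt_succ_diag_r _)).
  assert (AN := fun p => red_agree (S (length p)) N L p HNL (Nat.lt_succ_diag_r _)).
  destruct HML as [c HML]. destruct (eventually_ok _ _ _ HM HML) as [l Hl].
  split.
  - intro p. rewrite (agree_erase _ _ (AM p)), (agree_erase _ _ (AN p)). auto.
  - exists l. intros p nd1 Hp E. specialize (Hl p Hp). specialize (AM p). specialize (AN p).
    rewrite E in AM, Hl. destruct nd1 as [l1 a1]. simpl.
    destruct (BTc L p) as [[l2 a2]|]; [|tauto]. destruct (BTc N p) as [[l3 a3]|]; [|tauto].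
    simpl in *. destruct AM as [_ AM]. destruct AN as [_ AN].
    destruct a1, a2, a3; simpl in *; try tauto. lia.
Qed.
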